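(* Consider the mechanism $\mathcal{M}_{sCA}$ for the $s$-CA problem, run under best-response dynamics with random player order in which every agent starts with the empty declaration, an agent chosen for update who cannot improve his utility keeps his previous declaration, and agents play undominated strategies (single-minded declarations $(S_i,t_i(S_i))$). Then at every step of the dynamics the submitted declaration profile is separated.
   Context: $s$-CA problem: $n$ agents, a set $M$ of $m$ items; an allocation is feasible if the allocated sets are pairwise disjoint and each has at most $s$ items. Agent $i$ has a private monotone valuation $t_i$ with $t_i(\emptyset)=0$. A single-minded declaration $(S,x)$ assigns $x$ to supersets of $S$ and $0$ otherwise. Mechanism $\mathcal{M}_{sCA}$: (1) replace each declaration $d_i$ by $(S_i,d_i(S_i))$ with $S_i\in\arg\max_S d_i(S)$ (ties to smaller sets); (2) run the greedy algorithm $\mathcal{A}_{sCA}$, which considers the declared sets in decreasing order of declared value and allocates a set of size at most $s$ to its bidder if it is disjoint from all previously allocated sets, obtaining tentative sets $T_1,\dots,T_n$; (3) for each $i$ with $T_i\ne\emptyset$, let $p_i=\sum_{j\ne i:\,S_j\cap T_i\ne\emptyset}d_j(S_j)$, and if $d_i(T_i)\le p_i$ set $T_i=\emptyset$; (4) allocate $T_1,\dots,T_n$ and charge each winner the critical price under this mechanism, i.e. the infimum value he could declare for his set and still receive it. Utility = true value minus payment. For a profile $\mathbf{d}$ of single-minded declarations $(S_j,d_j(S_j))$ and a set $T$, $R_i(\mathbf{d},T)=\{j\ne i: S_j\cap T\ne\emptyset\}$ and $Q_i(\mathbf{d},T)=\{j\in R_i(\mathbf{d},T): d_j(S_j)<t_i(T)\}$.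 $\mathbf{d}$ is separated for agent $i$ if $\sum_{j\in Q_i(\mathbf{d},S_i)}d_j(S_j)\le d_i(S_i)$, and separated if it is separated for every agent. Best-response dynamics with random player order: at each step one uniformly random agent may switch to a utility-maximizing declaration given the others' current declarations. *)

(* Defs.v *)
From HB Require Import structures.
From mathcomp Require Import all_boot all_order all_algebra.
From mathcomp Require Import reals.
From mathcomp Require classical_sets.
Set Implicit Arguments. Unset Strict Implicit. Unset Printing Implicit Defensive.
Import Order.TTheory GRing.Theory Num.Theory.
Local Open Scope ring_scope.

Section SCA.
Variables (R : realType) (n m s : nat).

(* a single-minded declaration (S, x): value x on supersets of S, 0 otherwise *)
Definition decl := ({set 'I_m} * R)%type.
Definition profile := 'I_n -> decl.
Definition valuations := 'I_n -> {set 'I_m} -> R.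

Definition sm_value (dc : decl) (T : {set 'I_m}) : R :=
  if dc.1 \subset T then dc.2 else 0.

(* Step (1): a set in argmax of the declared valuation, ties broken towards
   smaller sets: S if x > 0, and the empty set otherwise. *)
Definition norm_set (dc : decl) : {set 'I_m} :=
  if dc.2 <= 0 then set0 else dc.1.

Definition upd (d : profile) (i : 'I_n) (dc : decl) : profile :=
  fun j => if j == i then dc else d j.

Definition prec (d : profile) (i j : 'I_n) : bool :=
  ((d j).2 < (d i).2) || (((d i).2 == (d j).2) && (i <= j)%N).

Fixpoint greedy_run (d : profile) (ord : seq 'I_n) (used : {set 'I_m})
  : {set 'I_n} :=
  match ord with
  | [::] => set0
  | i :: o =>
      if (#|norm_set (d i)| <= s)%N && [disjoint norm_set (d i) & used]
      then i |: greedy_run d o (norm_set (d i) :|: used)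
      else greedy_run d o used
  end.

Definition tentative (d : profile) (i : 'I_n) : {set 'I_m} :=
  if i \in greedy_run d (sort (prec d) (enum 'I_n)) set0
  then norm_set (d i) else set0.

Definition p3 (d : profile) (i : 'I_n) : R :=
  \sum_(j | (j != i) && (norm_set (d j) :&: tentative d i != set0))
     (d j).2.

Definition final_alloc (d : profile) (i : 'I_n) : {set 'I_m} :=
  if (tentative d i != set0) && (sm_value (d i) (tentative d i) <= p3 d i)
  then set0 else tentative d i.

Definition critical_price (d : profile) (i : 'I_n) : R :=
  inf (fun y : R => final_alloc (upd d i (final_alloc d i, y)) i
                   = final_alloc d i).

Definition payment (d : profile) (i : 'I_n) : R :=
  if final_alloc d i != set0 then critical_price d i else 0.

Definition utility (t : valuations) (d : profile) (i : 'I_n) : R :=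
  t i (final_alloc d i) - payment d i.

Definition undom (t : valuations) (i : 'I_n) (S : {set 'I_m}) : decl :=
  (S, t i S).

Definition improvable (t : valuations) (i : 'I_n) (d : profile) : Prop :=
  exists S, utility t (upd d i (undom t i S)) i > utility t d i.

Definition br_step (t : valuations) (i : 'I_n) (d d' : profile) : Prop :=
  (improvable t i d /\
     exists S, d' = upd d i (undom t i S) /\
       forall S', utility t (upd d i (undom t i S')) i
                  <= utility t (upd d i (undom t i S)) i)
  \/ (~ improvable t i d /\ d' = d).

Definition empty_profile : profile := fun _ => (set0, 0).

(* profiles occurring at some step of the dynamics, for some realization of
   the random order of players *)
Inductive reachable (t : valuations) : profile -> Prop :=
  | reach_init : reachable t empty_profile
  | reach_step i d d' : reachable t d -> br_step t i d d' -> reachable t d'.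

Definition Rset (d : profile) (i : 'I_n) (T : {set 'I_m}) : {set 'I_n} :=
  [set j | (j != i) && ((d j).1 :&: T != set0)].

Definition Qset (t : valuations) (d : profile) (i : 'I_n) (T : {set 'I_m})
  : {set 'I_n} :=
  [set j in Rset d i T | (d j).2 < t i T].

Definition separated_for (t : valuations) (d : profile) (i : 'I_n) : Prop :=
  \sum_(j in Qset t d i (d i).1) (d j).2 <= (d i).2.

Definition separated (t : valuations) (d : profile) : Prop :=
  forall i, separated_for t d i.

End SCA.

(* Main.v *)
Require Import Defs.
From HB Require Import structures.
From mathcomp Require Import all_boot all_order all_algebra.
From mathcomp Require Import reals.
From mathcomp Require classical_sets.
From Stdlib Require Import FunctionalExtensionality.
Import Order.TTheory GRing.Theory Num.Theory.
Local Open Scope ring_scope.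

Lemma upd_self (R : realType) (n m : nat) (d : profile R n m) k :
  upd d k (d k) = d.
Proof.
by apply: functional_extensionality => j; rewrite /upd; case: eqP => // ->.
Qed.

Lemma final_ne0 (R : realType) (n m s : nat) (d : profile R n m) k :
  final_alloc s d k != set0 ->
  [/\ final_alloc s d k = (d k).1, 0 < (d k).2 & p3 s d k < (d k).2].
Proof.
rewrite /final_alloc.
case: ifP => [_|/negbT]; first by rewrite eqxx.
move=> Hc Ht.
have Hnt : tentative s d k = (d k).1 /\ 0 < (d k).2.
  move: Ht; rewrite /tentative /norm_set.
  case: ifP => _; last by rewrite eqxx.
  case: ifP => [_|/negbT]; first by rewrite eqxx.
  by rewrite -ltNge => ->.
case: Hnt => Ht1 Hpos.
move: Hc; rewrite Ht /= -ltNge Ht1 /sm_value subxx /= => Hlt.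
by split.
Qed.

Arguments final_ne0 {R n m s d k}.

Lemma util_ge0 (R : realType) (n m s : nat) (t : valuations R n m)
  (t_empty : forall i, t i set0 = 0) (d : profile R n m) k :
  (forall j, (d j).2 = t j (d j).1) -> 0 <= utility s t d k.
Proof.
move=> Hd; rewrite /utility /payment.
case: ifP => [Hf|]; last by move/negbFE/eqP=> ->; rewrite t_empty subr0.
have [H1 Hpos _] := final_ne0 Hf.
rewrite subr_ge0 H1 -Hd /critical_price H1.
apply: ge_inf.
  exists 0 => y Hy; rewrite leNgt; apply/negP => Hy0.
  move: Hy; rewrite /final_alloc /tentative /norm_set /upd eqxx /= ltW //.
  rewrite !if_same => H0.
  by move: Hf; rewrite H1 -H0 eqxx.
by rewrite /= -surjective_pairing upd_self H1.
Qed.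

Arguments util_ge0 {R n m} s {t} t_empty {d} k.

Lemma sum_Q_le_p3 (R : realType) (n m s : nat) (t : valuations R n m)
  (d : profile R n m) k :
  (forall j, 0 <= (d j).2) -> tentative s d k = (d k).1 ->
  \sum_(j in Qset t d k (d k).1) (d j).2 <= p3 s d k.
Proof.
move=> Hnn Ht; rewrite /p3 Ht.
rewrite [X in _ <= X]big_mkcond [X in X <= _]big_mkcond /=.
apply: ler_sum => j _.
case: ifP => HQ; last by case: ifP.
move: HQ; rewrite /Qset /Rset !inE => /andP[/andP[Hjk Hint] _].
rewrite Hjk /= /norm_set.
case: ifP => Hle; first by [].
move: Hle; case: ifP => // _.
by rewrite Hint.
Qed.

Arguments sum_Q_le_p3 {R n m s t d k}.

Lemma step_ok (R : realType) (n m s : nat) (t : valuations R n m)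
  (t_empty : forall i, t i set0 = 0)
  (t_mono : forall i (A B : {set 'I_m}), A \subset B -> t i A <= t i B)
  (d : profile R n m) k S :
  (forall j, (d j).2 = t j (d j).1) -> separated t d ->
  0 < utility s t (upd d k (undom t k S)) k ->
  separated t (upd d k (undom t k S)).
Proof.
move=> Hd Hsep Hu.
set d' := upd d k (undom t k S).
have tnn : forall j X, 0 <= t j X.
  by move=> j X; rewrite -(t_empty j); apply: t_mono; apply: sub0set.
have Hd' : forall j, (d' j).2 = t j (d' j).1.
  by move=> j; rewrite /d' /upd; case: eqP => [->|_] //; exact: Hd.
have Hnn' : forall j, 0 <= (d' j).2 by move=> j; rewrite Hd'.
have Hf : final_alloc s d' k != set0.
  apply/negP => /eqP H0; move: Hu; rewrite /utility /payment H0 eqxx t_empty.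
  by rewrite subr0 ltxx.
have [H1 Hpos Hp3] := final_ne0 Hf.
have Htent : tentative s d' k = (d' k).1.
  by move: Hf H1; rewrite /final_alloc; case: ifP => //; rewrite eqxx.
have Hdk : d' k = (S, t k S) by rewrite /d' /upd eqxx.
move=> i.
case: (eqVneq i k) => [->|Hik].
  rewrite /separated_for; apply: le_trans (ltW Hp3).
  exact: sum_Q_le_p3.
have Hdi : d' i = d i by rewrite /d' /upd (negbTE Hik).
rewrite /separated_for Hdi.
apply: le_trans (Hsep i); rewrite /separated_for.
rewrite [X in _ <= X]big_mkcond [X in X <= _]big_mkcond /=.
apply: ler_sum => j _.
case: (eqVneq j k) => [->|Hjk]; last first.
  have -> : d' j = d j by rewrite /d' /upd (negbTE Hjk).
  rewrite /Qset /Rset !inE.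
  have -> : d' j = d j by rewrite /d' /upd (negbTE Hjk).
  by [].
case: ifP => HQ; last by case: ifP => // _; rewrite Hd tnn.
exfalso.
move: HQ; rewrite /Qset /Rset !inE eq_sym Hik /= Hdk /= => /andP[Hint Hlt].
have Hdi_pos : 0 < (d i).2 by rewrite Hd; apply: le_lt_trans Hlt.
have : (d i).2 <= p3 s d' k.
  rewrite /p3 (bigD1 i) /=; last first.
    rewrite Hik /= Htent Hdi /norm_set leNgt Hdi_pos /= Hdk /= setIC //.
  rewrite Hdi -[X in X <= _]addr0 lerD2l.
  by apply: sumr_ge0 => l _; apply: Hnn'.
move=> Hge.
have : (d i).2 < (d i).2.
  apply: le_lt_trans Hge _; apply: lt_trans Hp3 _.
  by rewrite Hdk /= Hd.
by rewrite ltxx.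
Qed.

Arguments step_ok {R n m s t} t_empty t_mono {d k S}.

Theorem lemma4p3 (R : realType) (n m s : nat) (t : valuations R n m)
  (t_empty : forall i, t i set0 = 0)
  (t_mono : forall i (A B : {set 'I_m}), A \subset B -> t i A <= t i B)
  (d : profile R n m) :
  reachable s t d -> separated t d.
Proof.
move=> Hr.
suff : (forall j, (d j).2 = t j (d j).1) /\ separated t d by case.
elim: Hr => [|i d0 d1 _ [IHf IHs] Hst].
  split; first by move=> j; rewrite /empty_profile /= t_empty.
  move=> i; rewrite /separated_for /empty_profile /=.
  rewrite big1 // => j; rewrite /Qset /Rset !inE /= set0I eqxx.
case: Hst => [[[S0 HS0] [S [-> Hmax]]]|[_ ->]]; last by split.
split; first by move=> j; rewrite /upd; case: eqP => [->|_] //; exact: IHf.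
apply: (step_ok t_empty t_mono IHf IHs).
apply: le_lt_trans (util_ge0 s t_empty i IHf) _.
exact: lt_le_trans HS0 (Hmax S0).
Qed.
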